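(* For all sufficiently small $a>0$: if $(x,y)\in R$, $x\ne2$, $|y|\le a$ and $(x,y)\notin V_a$, then $\mathbf{W}(x,y)\notin V_a$. Furthermore, a $\mathbf{W}$-orbit $(z_k)$ converges to $p_0$ if and only if there exist $a'\in(0,1/10]$ and $k_0$ such that $z_k\in V_{a'}$ for all $k\ge k_0$.
   Context: For $x>0$, $y\in\mathbb{R}$ let $r_1^2=4+x^2+4x^2y^2$, $\Delta=((x+2)^2+8x^2y^2)((x-2)^2+8x^2y^2)$ and $\omega_\pm(x,y)=\frac{x^2-4\pm\sqrt{\Delta}}{2r_1^2}$. Let $p_0=(2,0)$, $R=\{(x,y): x>0,\ 4-4y^2-x^2y^2-8x^2y^4\ge 0\}$, $R_+=R\cap((0,2]\times\mathbb{R})$, $R_-=R\cap([2,\infty)\times\mathbb{R})$, and $r$ the line $x=2$. Define $\mathbf{W}_\pm(x,y)=\left(\frac{1+\omega_\pm}{1-\omega_\pm}x,\ \frac{|\omega_\pm|}{1+\omega_\pm}y\right)$ on $R_\pm$, and $\mathbf{W}$ on $R\setminus(r\setminus\{p_0\})$ by $\mathbf{W}=\mathbf{W}_+$ for $x<2$, $\mathbf{W}=\mathbf{W}_-$ for $x>2$, $\mathbf{W}(p_0)=p_0$. The $\mathbf{W}$-orbit of $z_0$ is $z_{k+1}=\mathbf{W}(z_k)$, defined as long as no $z_k$ lies on $r\setminus\{p_0\}$. For $0<a\le1/10$, $V_a=\{(x,y): |y|\le a,\ |y|\ge|x-2|/10\}$. *)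

(* Defs.v *)
From Stdlib Require Import Reals Lra.
From Coquelicot Require Import Coquelicot.
Open Scope R_scope.

Definition r1sq (x y : R) : R := 4 + x^2 + 4 * x^2 * y^2.

Definition Delta (x y : R) : R :=
  ((x + 2)^2 + 8 * x^2 * y^2) * ((x - 2)^2 + 8 * x^2 * y^2).

Definition omega_plus (x y : R) : R :=
  (x^2 - 4 + sqrt (Delta x y)) / (2 * r1sq x y).

Definition omega_minus (x y : R) : R :=
  (x^2 - 4 - sqrt (Delta x y)) / (2 * r1sq x y).

Definition p0 : R * R := (2, 0).

Definition inR (z : R * R) : Prop :=
  let (x, y) := z in
  0 < x /\ 4 - 4 * y^2 - x^2 * y^2 - 8 * x^2 * y^4 >= 0.

Definition Wgen (w x y : R) : R * R :=
  ((1 + w) / (1 - w) * x, Rabs w / (1 + w) * y).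

Definition Wplus (z : R * R) : R * R :=
  let (x, y) := z in Wgen (omega_plus x y) x y.

Definition Wminus (z : R * R) : R * R :=
  let (x, y) := z in Wgen (omega_minus x y) x y.

(* W: W_+ for x<2, W_- for x>2, W(p0)=p0; the value on the line x=2
   away from p0 (where W is undefined) is irrelevant and set to the identity. *)
Definition W (z : R * R) : R * R :=
  let (x, y) := z in
  if Rlt_dec x 2 then Wplus z
  else if Rlt_dec 2 x then Wminus z
  else z.

Definition in_dom_W (z : R * R) : Prop :=
  inR z /\ (fst z = 2 -> z = p0).

Definition is_W_orbit (z : nat -> R * R) : Prop :=
  forall k, in_dom_W (z k) /\ z (S k) = W (z k).

Definition inV (a : R) (z : R * R) : Prop :=
  let (x, y) := z in Rabs y <= a /\ Rabs y >= Rabs (x - 2) / 10.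

(* Main.v *)
Require Import Defs.
From Stdlib Require Import Reals Lra Psatz Classical.
From Coquelicot Require Import Coquelicot.
Open Scope R_scope.

Lemma quad_rel (A s r t w : R) : 0 < r -> s * s = A * A + 16 * t * r ->
  (w = (A + s) / (2 * r) \/ w = (A - s) / (2 * r)) ->
  r * w^2 - A * w - 4 * t = 0.
Proof.
  intros Hr Hs Hw.
  assert (H2 : 2 * r * w = A + s \/ 2 * r * w = A - s).
  { destruct Hw as [-> | ->]; [left | right]; field; lra. }
  assert (E : 4 * r * (r * w^2 - A * w - 4 * t) = 0).
  { destruct H2 as [H2|H2];
    replace (4 * r * (r * w^2 - A * w - 4 * t)) with
      ((2*r*w)^2 - 2*A*(2*r*w) - 16*t*r) by ring; rewrite H2; nra. }
  apply Rmult_integral in E. destruct E as [E|E]; lra.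
Qed.

Lemma W_step (x y : R) : 0 < x -> x <> 2 ->
  exists w, W (x, y) = Wgen w x y /\ w^2 <= 4 * y^2 /\
    Rabs w * Rabs (x^2 - 4) <= 4 * x^2 * y^2.
Proof.
  intros Hx Hx2.
  set (A := x^2 - 4). set (r := r1sq x y). set (t := x^2 * y^2).
  set (s := sqrt (Defs.Delta x y)).
  assert (Hr : 0 < r) by (unfold r, r1sq; nra).
  assert (HD : Defs.Delta x y = A * A + 16 * t * r)
    by (unfold Defs.Delta, A, t, r, r1sq; ring).
  assert (HD0 : 0 <= Defs.Delta x y).
  { unfold Defs.Delta. apply Rmult_le_pos; nra. }
  assert (Hs0 : 0 <= s) by apply sqrt_pos.
  assert (Hss : s * s = A * A + 16 * t * r)
    by (unfold s; rewrite sqrt_sqrt; auto).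
  assert (Ht : 0 <= t) by (unfold t; nra).
  assert (HsA : Rabs A <= s).
  { rewrite <- (Rabs_pos_eq s Hs0). apply Rsqr_le_abs_0. unfold Rsqr. nra. }
  assert (key : forall w, (w = (A + s) / (2 * r) \/ w = (A - s) / (2 * r)) ->
     A * w <= 0 -> w^2 <= 4 * y^2 /\ Rabs w * Rabs (x^2 - 4) <= 4 * x^2 * y^2).
  { intros w Hw HAw. pose proof (quad_rel A s r t w Hr Hss Hw) as Q.
    split.
    - assert (r * w^2 <= 4 * t) by nra.
      assert (x^2 * w^2 <= r * w^2) by (unfold r, r1sq; nra).
      assert (x^2 * (w^2 - 4*y^2) <= 0) by (unfold t in *; nra).
      assert (0 < x^2) by nra.
      apply Rmult_le_reg_l with (x^2); lra.
    - rewrite <- Rabs_mult. fold A. rewrite Rabs_left1 by nra.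
      unfold t in Q. nra. }
  destruct (Rlt_dec x 2) as [Hlt|Hge].
  - exists (omega_plus x y).
    split. { unfold W. destruct (Rlt_dec x 2); [reflexivity|lra]. }
    apply key. left. reflexivity.
    assert (A < 0) by (unfold A; nra).
    assert (0 <= (A + s) / (2 * r)).
    { apply Rmult_le_pos; [|left; apply Rinv_0_lt_compat; lra].
      rewrite Rabs_left in HsA; lra. }
    unfold omega_plus. fold A r s. nra.
  - assert (Hgt : 2 < x) by lra.
    exists (omega_minus x y).
    split. { unfold W. destruct (Rlt_dec x 2); [lra|].
      destruct (Rlt_dec 2 x); [reflexivity|lra]. }
    apply key. right. reflexivity.
    assert (A > 0) by (unfold A; nra).
    assert ((A - s) / (2 * r) <= 0).
    { unfold Rdiv. apply Rmult_le_0_r; [|left; apply Rinv_0_lt_compat; lra].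
      rewrite Rabs_right in HsA; lra. }
    unfold omega_minus. fold A r s. nra.
Qed.

Lemma bounds (x y w : R) : 0 < x -> Rabs y <= 1/100 -> w^2 <= 4 * y^2 ->
  Rabs w <= 2 * Rabs y /\
  Rabs (Rabs w / (1 + w) * y) <= 103/100 * Rabs w * Rabs y /\
  Rabs ((1 + w) / (1 - w) * x - x) <= 41/20 * Rabs w * x.
Proof.
  intros Hx Hy Hw.
  assert (H1 : Rabs w <= 2 * Rabs y).
  { replace (2 * Rabs y) with (Rabs (2 * Rabs y)).
    2:{ rewrite Rabs_pos_eq; [reflexivity|pose proof (Rabs_pos y); lra]. }
    apply Rsqr_le_abs_0. unfold Rsqr.
    replace (2 * Rabs y * (2 * Rabs y)) with (4 * (Rabs y * Rabs y)) by ring.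
    rewrite <- Rabs_mult. rewrite Rabs_pos_eq by nra. nra. }
  assert (Hwa : Rabs w <= 1/50) by lra.
  assert (Hwb : -(1/50) <= w <= 1/50).
  { split; [apply Rabs_le_between in Hwa as []; lra|]. 
    pose proof (Rle_abs w); lra. }
  split; [exact H1|]. split.
  - rewrite Rabs_mult.
    assert (Hp : 0 < 1 + w) by lra.
    rewrite (Rabs_pos_eq (Rabs w / (1 + w))).
    2:{ apply Rmult_le_pos; [apply Rabs_pos|left; apply Rinv_0_lt_compat; lra]. }
    unfold Rdiv.
    assert (/ (1 + w) <= 103/100).
    { replace (103/100) with (/ (100/103)) by field.
      apply Rinv_le_contravar; lra. }
    pose proof (Rabs_pos w). pose proof (Rabs_pos y).
    assert (0 <= Rabs w * Rabs y) by nra.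
    assert (0 <= (103/100 - / (1+w)) * (Rabs w * Rabs y)) by (apply Rmult_le_pos; lra).
    nra.
  - assert (Hp : 0 < 1 - w) by lra.
    replace ((1 + w) / (1 - w) * x - x) with (2 * w * x * / (1 - w)) by (field; lra).
    rewrite !Rabs_mult. rewrite (Rabs_pos_eq 2) by lra. rewrite (Rabs_pos_eq x) by lra.
    rewrite (Rabs_pos_eq (/ (1 - w))) by (left; apply Rinv_0_lt_compat; lra).
    assert (/ (1 - w) <= 41/40).
    { replace (41/40) with (/ (40/41)) by field.
      apply Rinv_le_contravar; lra. }
    pose proof (Rabs_pos w).
    assert (0 < / (1-w)) by (apply Rinv_0_lt_compat; lra).
    assert (0 <= Rabs w * x) by nra.
    assert (0 <= (41/40 - / (1-w)) * (Rabs w * x)) by (apply Rmult_le_pos; lra).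
    nra.
Qed.

Lemma core_small (x ay U Wa E Y : R) : 0 < x -> x <= 4 -> 0 <= ay -> ay <= 1/100 ->
  10 * ay < U -> 0 <= Wa -> Wa <= 2 * ay -> Y <= 103/100 * Wa * ay ->
  0 <= E -> E <= 41/20 * Wa * x -> Wa * U * (x + 2) <= 4 * x^2 * ay^2 ->
  E + 10 * Y <= 10 * ay.
Proof.
  intros.
  assert (H10 : E * U * (x+2) <= 41/5 * x^3 * ay^2).
  { assert (E * (U*(x+2)) <= 41/20 * Wa * x * (U*(x+2))) by (apply Rmult_le_compat_r; nra).
    assert (41/20*x*(Wa * U * (x + 2)) <= 41/20*x*(4 * x^2 * ay^2)) by (apply Rmult_le_compat_l; nra).
    nra. }
  assert (Hx3 : x^3 <= 32/3 * (x+2)) by nra.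
  assert (E * U * (x+2) <= 41/5 * 32/3 * (x+2) * ay^2).
  { assert (0 <= ay^2) by nra. nra. }
  assert (E * U <= 41/5 * 32/3 * ay^2).
  { apply Rmult_le_reg_r with (x+2); nra. }
  assert (E * U <= 41/5 * 32/3 * ay * (U/10)) by nra.
  assert (E <= 41/5 * 32/3 * ay / 10).
  { apply Rmult_le_reg_r with U; [lra|]. unfold Rdiv in *. nra. }
  nra.
Qed.

Lemma core_large (x ay U Wa E Y : R) : 4 <= x -> 0 <= ay -> ay <= 1/100 ->
  10 * ay < U -> U = x - 2 -> 0 <= Wa -> Wa <= 2 * ay -> Y <= 103/100 * Wa * ay ->
  0 <= E -> E <= 41/20 * Wa * x -> Wa * U * (x + 2) <= 4 * x^2 * ay^2 ->
  E + 10 * Y < U.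
Proof.
  intros.
  assert (H10 : E * U * (x+2) <= 41/5 * x^3 * ay^2).
  { assert (E * (U*(x+2)) <= 41/20 * Wa * x * (U*(x+2))) by (apply Rmult_le_compat_r; nra).
    assert (41/20*x*(Wa * U * (x + 2)) <= 41/20*x*(4 * x^2 * ay^2)) by (apply Rmult_le_compat_l; nra).
    nra. }
  assert (E * U <= 41/5 * x^2 * ay^2).
  { apply Rmult_le_reg_r with (x+2); [lra|]. assert (0 <= x^2*ay^2) by nra. nra. }
  assert (E * U <= 41/5 * 4 * U^2 / 10000).
  { assert (x^2 <= 4 * U^2) by nra. assert (ay^2 <= 1/10000) by nra. nra. }
  assert (E <= 41/5 * 4 * U / 10000).
  { apply Rmult_le_reg_r with U; [lra|]. unfold Rdiv in *. nra. }
  nra.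
Qed.

Lemma step_data (x y : R) : 0 < x -> x <> 2 -> Rabs y <= 1/100 ->
  exists Wa, 0 <= Wa /\ Wa <= 2 * Rabs y /\
    Rabs (snd (W (x, y))) <= 103/100 * Wa * Rabs y /\
    Rabs (fst (W (x, y)) - x) <= 41/20 * Wa * x /\
    Wa * Rabs (x - 2) * (x + 2) <= 4 * x^2 * (Rabs y)^2.
Proof.
  intros Hx Hx2 Hy.
  destruct (W_step x y Hx Hx2) as [w [HW [Hw1 Hw2]]].
  destruct (bounds x y w Hx Hy Hw1) as [B1 [B2 B3]].
  exists (Rabs w). rewrite HW. simpl. repeat split; try assumption.
  apply Rabs_pos.
  replace (x^2 - 4) with ((x - 2) * (x + 2)) in Hw2 by ring.
  rewrite Rabs_mult, (Rabs_pos_eq (x+2)) in Hw2 by lra.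
  replace (Rabs y * (Rabs y * 1)) with (y^2). rewrite <- Rmult_assoc in Hw2. simpl in Hw2. lra.
  rewrite Rmult_1_r, <- Rabs_mult, Rabs_pos_eq by nra. ring.
Qed.

Lemma stepQ (x y : R) : 0 < x -> x <= 4 -> Rabs y <= 1/100 -> 10 * Rabs y < Rabs (x - 2) ->
  Rabs (fst (W (x, y)) - 2) - 10 * Rabs (snd (W (x, y))) >= Rabs (x - 2) - 10 * Rabs y.
Proof.
  intros Hx Hx4 Hy Hc.
  assert (Hx2 : x <> 2). { intro E. subst. rewrite Rminus_diag, Rabs_R0 in Hc. pose proof (Rabs_pos y). lra. }
  destruct (step_data x y Hx Hx2 Hy) as [Wa [H1 [H2 [H3 [H4 H5]]]]].
  pose proof (core_small x (Rabs y) (Rabs (x-2)) Wa _ _ Hx Hx4 (Rabs_pos y) Hy Hc H1 H2 H3 (Rabs_pos _) H4 H5).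
  pose proof (Rabs_triang_inv (x - 2) (x - fst (W (x,y)))).
  replace (x - 2 - (x - fst (W (x, y)))) with (fst (W (x, y)) - 2) in H0 by ring.
  rewrite (Rabs_minus_sym x (fst _)) in H0. lra.
Qed.

Lemma step_out (x y : R) : 0 < x -> Rabs y <= 1/100 -> 10 * Rabs y < Rabs (x - 2) ->
  10 * Rabs (snd (W (x, y))) < Rabs (fst (W (x, y)) - 2).
Proof.
  intros Hx Hy Hc.
  destruct (Rle_dec x 4) as [Hx4|Hx4].
  - pose proof (stepQ x y Hx Hx4 Hy Hc). lra.
  - assert (Hx2 : x <> 2) by lra.
    destruct (step_data x y Hx Hx2 Hy) as [Wa [H1 [H2 [H3 [H4 H5]]]]].
    rewrite (Rabs_pos_eq (x-2)) in * by lra.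
    pose proof (core_large x (Rabs y) (x-2) Wa _ _ ltac:(lra) (Rabs_pos y) Hy Hc eq_refl H1 H2 H3 (Rabs_pos _) H4 H5).
    pose proof (Rabs_triang_inv (x - 2) (x - fst (W (x,y)))).
    replace (x - 2 - (x - fst (W (x, y)))) with (fst (W (x, y)) - 2) in H0 by ring.
    rewrite (Rabs_minus_sym x (fst _)), (Rabs_pos_eq (x-2)) in H0 by lra. lra.
Qed.
Lemma ball_p0 (eps : R) (a b : R) : ball p0 eps (a,b) <-> Rabs (a-2) < eps /\ Rabs b < eps.
Proof. unfold p0. split.
 - intros [H1 H2]. unfold ball in H1, H2; simpl in H1, H2. unfold AbsRing_ball, abs, minus, plus, opp in *; simpl in *. split. exact H1. replace b with (b + - 0) by ring. exact H2.
 - intros [H1 H2]. split; unfold ball; simpl; unfold AbsRing_ball, abs, minus, plus, opp; simpl. exact H1. replace (b + - 0) with b by ring. exact H2.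
Qed.

Lemma contract (x y : R) : 0 < x -> x <> 2 -> Rabs y <= 1/10 ->
  Rabs (snd (W (x, y))) <= Rabs y / 4.
Proof.
  intros Hx Hx2 Hy.
  destruct (W_step x y Hx Hx2) as [w [HW [Hw1 _]]].
  rewrite HW. simpl.
  assert (H1 : Rabs w <= 2 * Rabs y).
  { replace (2 * Rabs y) with (Rabs (2 * Rabs y)).
    2:{ rewrite Rabs_pos_eq; [reflexivity|pose proof (Rabs_pos y); lra]. }
    apply Rsqr_le_abs_0. unfold Rsqr.
    replace (2 * Rabs y * (2 * Rabs y)) with (4 * (Rabs y * Rabs y)) by ring.
    rewrite <- Rabs_mult. rewrite Rabs_pos_eq by nra. nra. }
  assert (Hwb : -(1/5) <= w <= 1/5).
  { split; [apply Rabs_le_between in H1 as []; lra|]. pose proof (Rle_abs w); lra. }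
  assert (Hp : 0 < 1 + w) by lra.
  rewrite Rabs_mult. rewrite (Rabs_pos_eq (Rabs w / (1 + w))).
  2:{ apply Rmult_le_pos; [apply Rabs_pos|left; apply Rinv_0_lt_compat; lra]. }
  assert (Rabs w / (1 + w) <= 1/4).
  { apply Rmult_le_reg_r with (1+w); [lra|]. unfold Rdiv. rewrite Rmult_assoc, Rinv_l by lra.
    destruct (Rle_dec 0 w); [rewrite Rabs_pos_eq by lra|rewrite Rabs_left by lra]; lra. }
  pose proof (Rabs_pos y). nra.
Qed.

Lemma W_p0 : W p0 = p0.
Proof. unfold W, p0. destruct (Rlt_dec 2 2); [lra|]. destruct (Rlt_dec 2 2); [lra|]. reflexivity. Qed.

Theorem lemma5p2 :
  (exists a0 : R, 0 < a0 /\
     forall a : R, 0 < a -> a <= a0 -> a <= 1/10 ->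
       forall x y : R, inR (x, y) -> x <> 2 -> Rabs y <= a ->
         ~ inV a (x, y) -> ~ inV a (W (x, y)))
  /\
  (forall z : nat -> R * R, is_W_orbit z ->
     (filterlim z eventually (locally p0) <->
      exists a' : R, 0 < a' /\ a' <= 1/10 /\
        exists k0 : nat, forall k : nat, (k0 <= k)%nat -> inV a' (z k))).
Proof.
  split.
  { exists (1/100). split; [lra|].
    intros a Ha Ha0 _ x y HR Hx2 Hy Hn.
    destruct HR as [Hx _].
    assert (Hc : 10 * Rabs y < Rabs (x - 2)).
    { destruct (Rlt_le_dec (10 * Rabs y) (Rabs (x - 2))) as [h|h]; [exact h|].
      exfalso. apply Hn. split; [exact Hy|]. lra. }
    pose proof (step_out x y Hx ltac:(lra) Hc) as Hs.
    destruct (W (x, y)) as [x' y']. simpl in *. intros [_ H]. lra. }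
  intros z Hz. split.
  - intro Hlim. exists (1/100). split; [lra|]. split; [lra|].
    pose proof (proj1 (filterlim_locally z p0) Hlim) as HL.
    destruct (HL (mkposreal (1/100) ltac:(lra))) as [N HN].
    exists N. intros k Hk. apply NNPP. intro Hn.
    assert (Hbnd : forall j, (N <= j)%nat -> 0 < fst (z j) /\ fst (z j) <= 4 /\ Rabs (snd (z j)) <= 1/100).
    { intros j Hj. specialize (HN j Hj). destruct (Hz j) as [[HR _] _].
      destruct (z j) as [xj yj]. apply (proj1 (ball_p0 _ xj yj)) in HN. simpl in *. destruct HR as [HR _].
      destruct HN as [h1 h2]. apply Rabs_lt_between in h1. repeat split; lra. }
    destruct (Hbnd k Hk) as [_ [_ Hyk]].
    assert (Hc : 10 * Rabs (snd (z k)) < Rabs (fst (z k) - 2)).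
    { destruct (Rlt_le_dec (10 * Rabs (snd (z k))) (Rabs (fst (z k) - 2))) as [h|h]; [exact h|].
      exfalso. apply Hn. destruct (z k) as [xk yk]. simpl in *. split; lra. }
    set (q := Rabs (fst (z k) - 2) - 10 * Rabs (snd (z k))).
    assert (Hq : 0 < q) by (unfold q; lra).
    assert (Hind : forall j, Rabs (fst (z (k + j)%nat) - 2) - 10 * Rabs (snd (z (k + j)%nat)) >= q).
    { induction j.
      - rewrite Nat.add_0_r. unfold q; lra.
      - replace (k + S j)%nat with (S (k + j)) by lia.
        destruct (Hz (k + j)%nat) as [_ Hstep]. rewrite Hstep.
        destruct (Hbnd (k + j)%nat ltac:(lia)) as [h1 [h2 h3]].
        destruct (z (k + j)%nat) as [xj yj]. cbn [fst snd] in *.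
        pose proof (stepQ xj yj h1 h2 h3 ltac:(lra)). lra. }
    destruct (HL (mkposreal q Hq)) as [M HM].
    specialize (HM (k + M)%nat ltac:(lia)). specialize (Hind M).
    destruct (z (k + M)%nat) as [xm ym]. apply (proj1 (ball_p0 _ xm ym)) in HM. simpl in *.
    pose proof (Rabs_pos ym). lra.
  - intros [a' [Ha' [Ha'1 [k0 Hk0]]]].
    assert (Hdec : forall j, Rabs (snd (z (k0 + j)%nat)) <= (1/4)^j * a').
    { induction j.
      - rewrite Nat.add_0_r. specialize (Hk0 k0 (le_n _)).
        destruct (z k0) as [x0 y0]. simpl in *. lra.
      - replace (k0 + S j)%nat with (S (k0 + j)) by lia.
        destruct (Hz (k0 + j)%nat) as [[HR Hd] Hstep]. rewrite Hstep.
        specialize (Hk0 (k0 + j)%nat ltac:(lia)).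
        destruct (z (k0 + j)%nat) as [xj yj]. unfold inV, inR in *. cbn [fst snd] in *.
        destruct HR as [Hx _]. destruct Hk0 as [Hk1 Hk2].
        destruct (Req_dec xj 2) as [E|E].
        + specialize (Hd E). rewrite Hd, W_p0. simpl. rewrite Rabs_R0.
          pose proof (pow_le (1/4) j ltac:(lra)). nra.
        + pose proof (contract xj yj Hx E ltac:(lra)). assert (Rabs (snd (W (xj, yj))) <= (1/4)^j * a' / 4) by lra. simpl pow. replace (1/4 * (1/4)^j * a') with ((1/4)^j * a' / 4) by field. exact H0. }
    apply filterlim_locally. intros eps.
    destruct (pow_lt_1_zero (1/4) ltac:(rewrite Rabs_pos_eq; lra) (eps / 10) ltac:(destruct eps; simpl; lra))
      as [N HN].
    exists (k0 + N)%nat. intros k Hk.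
    specialize (Hdec (k - k0)%nat). specialize (HN (k - k0)%nat ltac:(lia)).
    replace (k0 + (k - k0))%nat with k in Hdec by lia.
    specialize (Hk0 k ltac:(lia)).
    destruct (z k) as [xk yk]. apply (proj2 (ball_p0 _ xk yk)). simpl in *.
    rewrite Rabs_pos_eq in HN by (apply pow_le; lra).
    destruct Hk0 as [_ Hk2].
    assert ((1/4)^(k-k0) * a' <= (1/4)^(k-k0) * (1/10)) by (apply Rmult_le_compat_l; [apply pow_le|]; lra).
    destruct eps; simpl in *. split; lra.
Qed.
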